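(* Let $(a_n),(b_n)$ be defined by $a_n=2a_{n-1}b_{n-1}$, $b_n=a_{n-1}^2$ for $n\ge2$, with $a_1=2$, $b_1=1$. Then this SNRE is of the dominating type.
   Context: An SNRE $\{a_n,b_n\}$ on two symbols is of the dominating type if it admits a dominate symbol, i.e. either $a_n\ge b_n$ for all $n\in\mathbb{N}$ or $b_n\ge a_n$ for all $n\in\mathbb{N}$. *)

(* Defs.v *)
From Stdlib Require Import Arith.

Definition dominating_type (a b : nat -> nat) : Prop :=
  (forall n, 1 <= n -> b n <= a n) \/ (forall n, 1 <= n -> a n <= b n).

(* Main.v *)
Require Import Defs.
From Stdlib Require Import Arith Lia.

Theorem lemma3 (a b : nat -> nat)
  (ha1 : a 1 = 2) (hb1 : b 1 = 1)
  (ha : forall n, 2 <= n -> a n = 2 * a (n - 1) * b (n - 1))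
  (hb : forall n, 2 <= n -> b n = a (n - 1) ^ 2) :
  dominating_type a b.
Proof.
  left.
  assert (H : forall k, b (S k) <= a (S k) <= 2 * b (S k)).
  { induction k as [|k IH].
    - rewrite ha1, hb1; lia.
    - rewrite (ha (S (S k))) by lia. rewrite (hb (S (S k))) by lia.
      replace (S (S k) - 1) with (S k) by lia. simpl. nia. }
  intros n Hn. destruct n as [|n]; [lia|]. apply H.
Qed.
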